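(* Let $\mathcal P$ be a random collection of pairwise disjoint finite subsets of $\mathbb Z$. Let $k\ge2$, $\gamma\in\mathbb R$ and $p_0>0$ be such that for all integers $i_1<i_2<\dots<i_k$, $$\Pr\big(\{i_1,\dots,i_k\}\in\mathcal P\big)\ \ge\ p_0\prod_{j=1}^{k-1}(i_{j+1}-i_j)^{-\gamma}.$$ Then $\gamma>1$ and $p_0\le\dfrac{1}{k\,\zeta(\gamma)^{k-1}}$, where $\zeta$ is the Riemann zeta function. *)

(* Defs.v *)
From HB Require Import structures.
From mathcomp Require Import all_boot all_order all_algebra.
From mathcomp Require Import all_classical all_reals all_analysis.
Set Implicit Arguments. Unset Strict Implicit. Unset Printing Implicit Defensive.
Import Order.TTheory GRing.Theory Num.Theory numFieldNormedType.Exports.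
Local Open Scope classical_set_scope.
Local Open Scope ring_scope.

(* Riemann zeta function on the reals: zeta s = sum_{n >= 1} n^(-s)
   (meaningful for s > 1; for s <= 1 the value is the library's default of
   [lim] on a divergent sequence). *)
Definition zeta (R : realType) (s : R) : R :=
  limn (series (fun n : nat => (n.+1)%:R `^ (- s))).

Definition random_disjoint_collection d (Omega : measurableType d)
    (P : Omega -> set (set int)) : Prop :=
  [/\ (forall w A, P w A -> finite_set A),
      (forall w A B, P w A -> P w B -> A <> B -> A `&` B = set0) &
      (forall S : set int, finite_set S -> measurable [set w | P w S])].

(* Main.v *)
Require Import Defs.
From HB Require Import structures.
From mathcomp Require Import all_boot all_order all_algebra.
From mathcomp Require Import all_classical all_reals all_analysis.
From mathcomp Require Import zify ring lra.
Set Implicit Arguments. Unset Strict Implicit. Unset Printing Implicit Defensive.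
Import Order.TTheory GRing.Theory Num.Theory numFieldNormedType.Exports.
Local Open Scope classical_set_scope.
Local Open Scope ring_scope.

Definition pos (k N : nat) (g : {ffun 'I_k.-1 -> 'I_N}) (i : nat) : nat :=
  (\sum_(j < k.-1 | (j < i)%N) (g j).+1)%N.

Definition sq (k N : nat) (m : 'I_k) (g : {ffun 'I_k.-1 -> 'I_N}) : seq int :=
  [seq (pos g i)%:Z - (pos g m)%:Z | i <- iota 0 k].

Lemma pos0 k N (g : {ffun 'I_k.-1 -> 'I_N}) : pos g 0 = 0%N.
Proof. by rewrite /pos big_pred0. Qed.

Lemma posS k N (g : {ffun 'I_k.-1 -> 'I_N}) (j : 'I_k.-1) :
  pos g j.+1 = (pos g j + (g j).+1)%N.
Proof.
rewrite /pos (bigD1 j) //= addnC; congr (_ + _)%N.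
apply: eq_bigl => j'; rewrite ltnS -(inj_eq val_inj) /=.
by case: ltngtP.
Qed.

Lemma sorted_map_iota (f : nat -> int) a n :
  (forall i, (a <= i)%N -> (i.+1 < a + n)%N -> f i < f i.+1) ->
  sorted <%R (map f (iota a n)).
Proof.
elim: n a => [|n IH] a H //=.
case: n IH H => [|n] IH H //=.
apply/andP; split.
  by apply: H => //; rewrite addnS; lia.
have := IH a.+1; rewrite /=; apply => i ai hi.
by apply: H; lia.
Qed.

Lemma size_sq k N (m : 'I_k) g : size (@sq k N m g) = k.
Proof. by rewrite /sq size_map size_iota. Qed.

Lemma nth_sq k N (m : 'I_k) g i : (i < k)%N ->
  (@sq k N m g)`_i = (pos g i)%:Z - (pos g m)%:Z.
Proof. by move=> ik; rewrite /sq (nth_map 0%N) ?size_iota // nth_iota. Qed.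

Lemma sorted_sq k N (m : 'I_k) g : sorted <%R (@sq k N m g).
Proof.
apply: sorted_map_iota => i _ hi; rewrite add0n in hi.
have ik : (i < k.-1)%N by rewrite -ltnS; case: (k) hi => //.
rewrite (posS g (Ordinal ik)) /= ltrD2r PoszD ltrDl //.
Qed.

Lemma diff_sq k N (m : 'I_k) g (j : 'I_k.-1) :
  (@sq k N m g)`_j.+1 - (@sq k N m g)`_j = ((g j).+1)%:Z.
Proof.
have jk : (j.+1 < k)%N by case: (k) j => [|k'] [j' hj] //.
rewrite !nth_sq //; last exact: ltnW.
by rewrite posS PoszD; ring.
Qed.

Lemma sq_m k N (m : 'I_k) g : (@sq k N m g)`_m = 0.
Proof. by rewrite nth_sq // subrr. Qed.

Lemma sq_inj k N (m1 m2 : 'I_k) g1 g2 :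
  @sq k N m1 g1 = @sq k N m2 g2 -> m1 = m2 /\ g1 = g2.
Proof.
move=> e; split.
  apply: val_inj => /=.
  have u1 := lt_sorted_uniq (sorted_sq m1 g1).
  have u2 := lt_sorted_uniq (sorted_sq m2 g2).
  have h1 : index 0 (sq m1 g1) = m1 by rewrite -{1}(sq_m m1 g1) index_uniq ?size_sq.
  have h2 : index 0 (sq m2 g2) = m2 by rewrite -{1}(sq_m m2 g2) index_uniq ?size_sq.
  by rewrite -h1 -h2 e.
apply/ffunP => j; apply: val_inj.
have := diff_sq m1 g1 j; rewrite e diff_sq.
by case.
Qed.
Lemma in_bigsetU (T : Type) (I : eqType) (E : I -> set T) (r : seq I) (w : T) :
  (\big[setU/set0]_(i <- r) E i) w -> exists i, i \in r /\ E i w.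
Proof.
elim: r => [|a r IH]; first by rewrite big_nil.
rewrite big_cons => -[Ea|/IH [i [ir Ei]]]; first by exists a; rewrite mem_head.
by exists i; rewrite in_cons ir orbT.
Qed.

Lemma sum_disj (R : realType) d (Omega : measurableType d)
  (Pr : probability Omega R) (I : eqType) (E : I -> set Omega) (r : seq I) :
  uniq r -> (forall i, measurable (E i)) ->
  (forall i j, i != j -> E i `&` E j = set0) ->
  (\sum_(i <- r) Pr (E i) = Pr (\big[setU/set0]_(i <- r) E i))%E.
Proof.
move=> ur mE dE; elim: r ur => [|a r IH] /=; first by rewrite !big_nil measure0.
case/andP=> ar ur; rewrite !big_cons IH // measureU //.
- exact: bigsetU_measurable.
- apply/seteqP; split => w //=; case=> Ea /(@in_bigsetU _ _ E r w) [i [ir Ei]].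
  have ai : a != i by by apply: contra ar => /eqP ->.
  have := dE _ _ ai; move=> h; have : (E a `&` E i) w by split.
  by rewrite h.
Qed.
Lemma stepA (R : realType) (d : measure_display) (Omega : measurableType d)
    (Pr : probability Omega R) (P : Omega -> set (set int))
    (k : nat) (gamma p0 : R) :
  random_disjoint_collection P ->
  (forall s : seq int, size s = k -> sorted <%R s ->
     ((p0 * \prod_(j < k.-1) ((s`_j.+1 - s`_j)%:~R `^ (- gamma)))%:E
        <= Pr [set w | P w [set` s]])%E) ->
  forall N : nat,
  k%:R * p0 * (\sum_(n < N) ((n.+1)%:R `^ (- gamma))) ^+ k.-1 <= 1.
Proof.
move=> [_ Pdisj Pmeas] H N.
set E := fun (m : 'I_k) (g : {ffun 'I_k.-1 -> 'I_N}) =>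
  [set w | P w [set` sq m g]].
have eqsum : \sum_(m : 'I_k) \sum_(g : {ffun 'I_k.-1 -> 'I_N})
    p0 * \prod_(j < k.-1) (((g j).+1)%:R `^ (-gamma)) =
    k%:R * p0 * (\sum_(n < N) ((n.+1)%:R `^ (- gamma))) ^+ k.-1.
  under eq_bigr do rewrite -mulr_sumr.
  rewrite -(bigA_distr_bigA (fun (j : 'I_k.-1) (n : 'I_N) => (n.+1)%:R `^ (-gamma))).
  rewrite prodr_const card_ord GRing.sumr_const card_ord.
  by rewrite mulr_natl mulrnAl.
have le : forall m (g : {ffun 'I_k.-1 -> 'I_N}), ((p0 * \prod_(j < k.-1) (((g j).+1)%:R `^ (-gamma)))%:E
    <= Pr (E m g))%E.
  move=> m g; have := H (sq m g) (size_sq m g) (sorted_sq m g).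
  congr (_%:E <= _)%E; congr (_ * _); apply: eq_bigr => j _.
  by rewrite diff_sq -pmulrn.
have : ((k%:R * p0 * (\sum_(n < N) ((n.+1)%:R `^ (- gamma))) ^+ k.-1)%:E
    <= 1)%E.
  rewrite -eqsum -sumEFin; under eq_bigr do rewrite -sumEFin.
  apply: (@le_trans _ _ (\sum_(m : 'I_k) \sum_(g : {ffun 'I_k.-1 -> 'I_N})
      Pr (E m g))%E).
    by apply: lee_sum => m _; apply: lee_sum => g _; exact: le.
  have mE : forall p : 'I_k * {ffun 'I_k.-1 -> 'I_N}, measurable (E p.1 p.2).
    by move=> p; apply: Pmeas; exact: finite_seq.
  rewrite pair_bigA /= (@sum_disj _ _ _ Pr _ (fun p => E p.1 p.2) _ (index_enum_uniq _) mE) //.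
    apply: probability_le1; exact: bigsetU_measurable.
  move=> p q pq; apply/seteqP; split => w //=; case=> Pp Pq.
  have neq : [set` sq p.1 p.2] <> [set` sq q.1 q.2].
    move=> eqS; move/negP: pq; apply; apply/eqP.
    have : sq p.1 p.2 = sq q.1 q.2.
      apply: lt_sorted_eq; [exact: sorted_sq | exact: sorted_sq|] => x.
      have hx : ([set` sq p.1 p.2] x <-> [set` sq q.1 q.2] x) by rewrite eqS.
      by apply/idP/idP => /hx.
    by case/sq_inj => e1 e2; apply/pair_eqP; rewrite /pair_eq e1 e2 !eqxx.
  have := Pdisj w _ _ Pp Pq neq; move=> h.
  have : ([set` sq p.1 p.2] `&` [set` sq q.1 q.2]) 0.
    split => /=.
      by rewrite -{1}(sq_m p.1 p.2) mem_nth ?size_sq.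
    by rewrite -{1}(sq_m q.1 q.2) mem_nth ?size_sq.
  by rewrite h.
by rewrite lee_fin.
Qed.
Unset Implicit Arguments.
Theorem mainTheorem6 (R : realType) (d : measure_display) (Omega : measurableType d)
    (Pr : probability Omega R) (P : Omega -> set (set int))
    (k : nat) (gamma p0 : R) :
  random_disjoint_collection P ->
  (2 <= k)%N -> 0 < p0 ->
  (forall s : seq int, size s = k -> sorted <%R s ->
     ((p0 * \prod_(j < k.-1) ((s`_j.+1 - s`_j)%:~R `^ (- gamma)))%:E
        <= Pr [set w | P w [set` s]])%E) ->
  1 < gamma /\ p0 <= 1 / (k%:R * zeta gamma ^+ k.-1).
Proof.
move=> RP k2 p0gt0 H.
have A := @stepA R d Omega Pr P k gamma p0 RP H.
set F : nat -> R := fun n => (n.+1)%:R `^ (- gamma).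
set S := series F.
have hS : forall N, S N = \sum_(n < N) F n.
  by move=> N; rewrite /S /series /= big_mkord.
have F0 : forall n, 0 <= F n by move=> n; apply/ltW/powR_gt0; rewrite ltr0Sn.
have kp0 : 0 < k%:R * p0 by rewrite mulr_gt0 // ltr0n; lia.
have S1 : forall n, 1 <= S n.+1.
  move=> n; rewrite hS big_ord_recl /= {1}/F powR1 lerDl.
  by apply: sumr_ge0 => i _.
have bound : forall N, S N <= (k%:R * p0)^-1.
  move=> N; have AN := A N.
  have X : S N ^+ k.-1 <= (k%:R * p0)^-1.
    by rewrite -(ler_pM2l kp0) mulfV ?gt_eqF // hS.
  clear AN; case: N X => [|n] X; first by rewrite hS big_ord0 invr_ge0 ltW.
  apply: le_trans X; apply: ler_eXnr => //; lia.
have cvgS : cvgn S.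
  apply: nondecreasing_is_cvgn.
    by apply: nondecreasing_series => n _ _; exact: F0.
  by exists (k%:R * p0)^-1 => _ [n _ <-].
split.
  rewrite ltNge; apply/negP => g1.
  apply: (@dvg_riemannR R 1); first by rewrite ler01 lexx.
  apply: (series_le_cvg _ _ _ cvgS) => //.
    by move=> n; apply/ltW/riemannR_gt0.
  move=> n; rewrite /riemannR /F -powRN; apply: ler_powR.
    by rewrite ler1n.
  by rewrite lerN2.
have zE : zeta gamma = limn S by [].
rewrite zE; set z := limn S.
have z1 : 1 <= z.
  apply: le_trans (S1 0%N) _; apply: nondecreasing_cvgn_le => //.
  by apply: nondecreasing_series => n _ _; exact: F0.
have cv : (fun N => k%:R * p0 * S N ^+ k.-1) @ \oo --> k%:R * p0 * z ^+ k.-1.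
  apply: cvgM; first exact: cvg_cst.
  exact: (continuous_cvg _ (@exprn_continuous R k.-1 z)).
have lim1 : k%:R * p0 * z ^+ k.-1 <= 1.
  rewrite -(cvg_lim _ cv) //; apply: limr_le; first by apply: cvgP cv.
  by near=> N; rewrite hS; exact: A.
rewrite ler_pdivlMr; last first.
  by rewrite mulr_gt0 ?exprn_gt0 ?ltr0n //; [lia | exact: lt_le_trans z1].
by have -> : p0 * (k%:R * z ^+ k.-1) = k%:R * p0 * z ^+ k.-1 by ring.
Unshelve. all: by end_near.
Qed.
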